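(* Consider $n$ independent Bernoulli trials, each succeeding with probability $p$, and let $X$ be the number of successes. If $p\ge 1/2$, then $\Pr(X\ge n/2)\ge p$. *)

(* Defs.v *)
From HB Require Import structures.
From mathcomp Require Import all_boot all_order all_algebra.
Set Implicit Arguments. Unset Strict Implicit. Unset Printing Implicit Defensive.
Import Order.TTheory GRing.Theory Num.Theory.
Local Open Scope ring_scope.

(* Outcome space of n trials: w i = true iff trial i succeeds.
   Probability of a single outcome under independence: product of the
   per-trial probabilities (p for success, 1 - p for failure). *)
Definition trial_weight (R : numDomainType) (n : nat) (p : R)
  (w : {ffun 'I_n -> bool}) : R :=
  \prod_(i < n) (if w i then p else 1 - p).

Definition trials_prob (R : numDomainType) (n : nat) (p : R)
  (A : pred {ffun 'I_n -> bool}) : R :=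
  \sum_(w | A w) trial_weight p w.

Definition num_successes (n : nat) (w : {ffun 'I_n -> bool}) : nat :=
  #|[set i | w i]|.

(* Main.v *)
Require Import Defs.
From HB Require Import structures.
From mathcomp Require Import all_boot all_order all_algebra.
From mathcomp Require Import zify ring lra.
Import Order.TTheory GRing.Theory Num.Theory.
Local Open Scope ring_scope.

Lemma weight_formula (R : realFieldType) (n : nat) (p : R) (w : {ffun 'I_n -> bool}) :
  trial_weight p w = p ^+ num_successes w * (1 - p) ^+ (n - num_successes w)%N.
Proof.
rewrite /trial_weight (bigID (fun i => w i)) /=.
rewrite (eq_bigr (fun=> p)); last by move=> i ->.
rewrite [X in _ * X](eq_bigr (fun=> 1 - p)); last by move=> i /negbTE ->.
rewrite !prodr_const /num_successes.
have -> : #|[set i | w i]| = #|(fun i => w i)|.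
  by apply: eq_card => i; rewrite inE.
congr (_ * _ ^+ _).
have := cardC (fun i => w i); rewrite card_ord.
move=> h; rewrite -[X in _ = (X - _)%N]h addKn; apply: eq_card => i; by rewrite !inE.
Qed.


Definition negw {n : nat} (w : {ffun 'I_n -> bool}) : {ffun 'I_n -> bool} :=
  [ffun i => ~~ w i].

Lemma negwK (n : nat) : involutive (@negw n).
Proof. by move=> w; apply/ffunP => i; rewrite !ffunE negbK. Qed.

Lemma num_negw (n : nat) (w : {ffun 'I_n -> bool}) :
  num_successes (negw w) = (n - num_successes w)%N.
Proof.
rewrite /num_successes.
have -> : [set i | negw w i] = ~: [set i | w i].
  by apply/setP => i; rewrite !inE ffunE.
have := cardsC [set i | w i]; rewrite card_ord => h.
by rewrite -[X in _ = (X - _)%N]h addKn.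
Qed.

Lemma total_weight (R : realFieldType) (n : nat) (p : R) :
  \sum_(w : {ffun 'I_n -> bool}) trial_weight p w = 1.
Proof.
rewrite /trial_weight -(bigA_distr_bigA (fun (i : 'I_n) (b : bool) => if b then p else 1 - p)) /=.
apply: big1 => i _.
by rewrite big_bool /= addrC subrK.
Qed.

Theorem lemma8 (R : realFieldType) (n : nat) (p : R) :
  1 / 2 <= p -> p <= 1 ->
  trials_prob p (fun w : {ffun 'I_n -> bool} =>
                   n%:R / 2 <= (num_successes w)%:R :> R) >= p.
Proof.
move=> hp1 hp2.
set A := (fun w : {ffun 'I_n -> bool} => n%:R / 2 <= (num_successes w)%:R :> R).
have q0 : 0 <= 1 - p by rewrite subr_ge0.
have p0 : 0 <= p by lra.
have qp : 1 - p <= p by lra.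
have wt0 : forall w : {ffun 'I_n -> bool}, 0 <= trial_weight p w.
  by move=> w; rewrite weight_formula mulr_ge0 // exprn_ge0.
have key : forall w : {ffun 'I_n -> bool}, ~~ A w ->
   A (negw w) /\ p * trial_weight p w <= (1 - p) * trial_weight p (negw w).
  move=> w; rewrite /A num_negw -ltNge => hk.
  set k := num_successes w in hk *.
  have hkn : (2 * k < n)%N.
    by rewrite -(ltr_nat R) natrM mulrC -ltr_pdivlMr ?ltr0n.
  have kn : (k <= n)%N by lia.
  split.
    rewrite natrB // ler_pdivrMr ?ltr0n // mulrBl -!natrM lerBrDl -natrD.
    by rewrite ler_nat; lia.
  rewrite !weight_formula num_negw subKn //.
  have -> : (n - k = k.+1 + (n - 2 * k).-1)%N by lia.
  rewrite !exprD !exprS !mulrA.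
  rewrite -/k; set d := (n - 2 * k).-1.
  set C := p * p ^+ k * (1 - p) * (1 - p) ^+ k.
  have -> : (1 - p) * p * p ^+ k * p ^+ d * (1 - p) ^+ k = C * p ^+ d.
    by rewrite /C; ring.
  apply: ler_wpM2l; first by rewrite /C !mulr_ge0 // exprn_ge0.
  by apply: lerXn2r; rewrite // nnegrE.
have tot := total_weight R n p.
rewrite (bigID A) /= in tot.
rewrite /trials_prob.
set SA := \sum_(w | A w) trial_weight p w in tot *.
set SN := \sum_(w | ~~ A w) trial_weight p w in tot.
have H : p * SN <= (1 - p) * SA.
  rewrite /SN mulr_sumr.
  apply: le_trans (_ : \sum_(w | ~~ A w) (1 - p) * trial_weight p (negw w) <= _).
    by apply: ler_sum => w /key [].
  rewrite (reindex_inj (can_inj (@negwK n))) /= /SA mulr_sumr.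
  rewrite [X in X <= _]big_mkcond [X in _ <= X]big_mkcond /=.
  apply: ler_sum => w _; rewrite negwK.
  case: ifP => h1; case: ifP => h2 //; last by rewrite mulr_ge0.
  by have := key _ h1; rewrite negwK h2 => -[].
have e : p = p * (SA + SN) by rewrite tot mulr1.
rewrite [X in X <= _]e.
rewrite mulrDr; apply: le_trans (lerD (lexx _) H) _.
by rewrite -mulrDl addrC subrK mul1r.
Qed.
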